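(* Let $P\subseteq\mathbb{R}^2$ be a convex polygon such that $\tau P=P^{\circ}$. Then $P$ has at least $6$ vertices.
   Context: $\tau:\mathbb{R}^2\to\mathbb{R}^2$ denotes the $90^\circ$ counterclockwise rotation. The polar of $P$ is $P^{\circ}=\{x\in\mathbb{R}^2: y^\top x\le 1\text{ for all }y\in P\}$. *)

(* Defs.v *)
From mathcomp Require Import all_boot all_order all_algebra.
From mathcomp Require Import reals.
Set Implicit Arguments. Unset Strict Implicit. Unset Printing Implicit Defensive.
Import Order.TTheory GRing.Theory Num.Theory.
Local Open Scope ring_scope.

Section Defs.
Variable R : realType.

Definition point := (R * R)%type.

Definition dot (x y : point) : R := x.1 * y.1 + x.2 * y.2.

Definition tau (x : point) : point := (- x.2, x.1).

Definition tau_img (P : point -> Prop) : point -> Prop :=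
  fun x => exists y, P y /\ x = tau y.

Definition polar (P : point -> Prop) : point -> Prop :=
  fun x => forall y, P y -> dot y x <= 1.

Definition conv_hull (S : seq point) : point -> Prop :=
  fun x => exists w : 'I_(size S) -> R,
    (forall i, 0 <= w i) /\ \sum_(i < size S) w i = 1 /\
    x.1 = \sum_(i < size S) w i * (nth (0, 0) S i).1 /\
    x.2 = \sum_(i < size S) w i * (nth (0, 0) S i).2.

Definition convex_polygon (P : point -> Prop) : Prop :=
  exists S : seq point, forall x, P x <-> conv_hull S x.

Definition is_vertex (P : point -> Prop) (x : point) : Prop :=
  P x /\ forall y z : point, P y -> P z -> forall t : R, 0 < t < 1 ->
    x = (t * y.1 + (1 - t) * z.1, t * y.2 + (1 - t) * z.2) -> y = x /\ z = x.

End Defs.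

(* Main.v *)
Require Import Defs.
From Stdlib Require Import Classical.
From mathcomp Require Import all_boot all_order all_algebra.
From mathcomp Require Import reals.
From mathcomp Require Import ring lra.
Import Order.TTheory GRing.Theory Num.Theory.
Local Open Scope ring_scope.

Definition cross {R : realType} (x y : point R) : R := x.1 * y.2 - x.2 * y.1.
Definition comb {R : realType} (t : R) (x y : point R) : point R :=
  (t * x.1 + (1 - t) * y.1, t * x.2 + (1 - t) * y.2).
Definition pneg {R : realType} (x : point R) : point R := (- x.1, - x.2).
Definition convex {R : realType} (C : point R -> Prop) :=
  forall x y t, C x -> C y -> 0 <= t <= 1 -> C (comb t x y).

Fixpoint hull {R : realType} (S : seq (point R)) : point R -> Prop :=
  match S with
  | [::] => fun _ => False
  | s :: S' => fun x => exists t y, 0 <= t <= 1 /\ (t = 1 \/ hull S' y) /\ x = comb t s y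
  end.

Lemma comb1 {R : realType} (x y : point R) : comb 1 x y = x.
Proof. case: x => a b; rewrite /comb /=; congr pair; ring. Qed.
Lemma comb0 {R : realType} (x y : point R) : comb 0 x y = y.
Proof. case: y => a b; rewrite /comb /=; congr pair; ring. Qed.

Lemma hull_min {R : realType} (C : point R -> Prop) S :
  convex C -> (forall s, s \in S -> C s) -> forall x, hull S x -> C x.
Proof.
move=> cC; elim: S => [|s S IH] //= hS x [t [y [t01 [Hy ->]]]].
case: Hy => [->|Hy]; first by rewrite comb1; apply: hS; rewrite inE eqxx.
apply: cC => //; first by apply: hS; rewrite inE eqxx.
apply: IH => // z zS; apply: hS; by rewrite inE zS orbT.

Qed.

Lemma hull_mem {R : realType} (S : seq (point R)) s : s \in S -> hull S s.
Proof.
elim: S => [|a S IH] //=; rewrite inE => /orP [/eqP ->|sS].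
  by exists 1, a; rewrite comb1; split; [lra| split; [left|]].
exists 0, s; rewrite comb0; split; first lra.
by split => //; right; apply: IH.
Qed.

Lemma hull_convex {R : realType} (S : seq (point R)) : convex (hull S).
Proof.
elim: S => [|s S IH] x y t //= [t1 [x' [t101 [Hx ->]]]] [t2 [y' [t201 [Hy ->]]]] t01.
set a := t * (1 - t1); set b := (1 - t) * (1 - t2).
have ha : 0 <= a by apply: mulr_ge0; lra.
have hb : 0 <= b by apply: mulr_ge0; lra.
have E : forall u v w : R, t * (t1 * u + (1 - t1) * v) + (1 - t) * (t2 * u + (1 - t2) * w)
   = (1 - (a + b)) * u + a * v + b * w by move=> u v w; rewrite /a /b; ring.
have [ab0|abn0] := eqVneq (a + b) 0.
  have a0 : a = 0 by lra.
  have b0 : b = 0 by lra.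
  exists 1, s; split; first lra; split; first by left.
  rewrite comb1 /comb /= !E ab0 a0 b0; case: (s) => s1 s2 /=; congr pair; ring.
have abp : 0 < a + b by rewrite lt0r abn0 /=; lra.
exists (1 - (a + b)), (comb (a / (a + b)) x' y'); split.
  have : a + b <= 1.
    suff : t * t1 + (1 - t) * t2 >= 0.
      have -> : a + b = 1 - (t * t1 + (1 - t) * t2) by rewrite /a /b; ring.
      lra.
    apply: addr_ge0; apply: mulr_ge0; lra.
  lra.
split; last first.
  rewrite /comb /= !E; congr pair; field; exact: abn0.
right.
case: Hx => [t11|Hx].
  have a0 : a = 0 by rewrite /a t11; ring.
  rewrite a0 mul0r comb0; case: Hy => // t21.
  by move: abn0; rewrite a0 /b t21; rewrite subrr mulr0 addr0 eqxx.
case: Hy => [t21|Hy].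
  have b0 : b = 0 by rewrite /b t21; ring.
  have a0 : a != 0 by move: abn0; rewrite b0 addr0.
  by rewrite b0 addr0 divff // comb1.
apply: IH => //; apply/andP; split.
  by apply: divr_ge0 => //; exact: ltW.
by rewrite ler_pdivrMr // mul1r lerDl.
Qed.

Lemma conv_to_hull {R : realType} (S : seq (point R)) x : conv_hull S x -> hull S x.
Proof.
elim: S x => [|s S IH] x [w [w0 [w1 [x1 x2]]]] /=.
  by move: w1; rewrite big_ord0 => /eqP; rewrite eq_sym oner_eq0.
move: w1 x1 x2; rewrite !big_ord_recl /= => w1 x1 x2.
set W := w ord0 in w1 x1 x2.
set w' := fun i : 'I_(size S) => w (lift ord0 i) in w1 x1 x2.
have w'0 : forall i, 0 <= w' i by move=> i; apply: w0.
have [W1|Wn1] := eqVneq W 1.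
  have z : forall i, w' i = 0.
    have hs : \sum_(i < size S) w' i = 0.
      by move: w1; rewrite W1; lra.
    move=> i; exact: (psumr_eq0P (fun j _ => w'0 j) hs).
  have z' : forall i, w (lift ord0 i) = 0 := z.
  exists 1, s; split; first lra; split; first by left.
  rewrite comb1; case: x x1 x2 => a b /= -> ->; rewrite W1.
  rewrite !big1 ?addr0 ?mul1r; first by case: (s).
    by move=> i _; rewrite z' mul0r.
  by move=> i _; rewrite z' mul0r.
have WD : 1 - W != 0 by rewrite subr_eq0 eq_sym.
have sw' : \sum_(i < size S) w' i = 1 - W by move: w1; lra.
have W01 : 0 <= W <= 1.
  have : 0 <= \sum_(i < size S) w' i by apply: sumr_ge0 => i _; exact: w'0.
  have := w0 ord0; rewrite sw' -/W; lra.
exists W, ((\sum_(i < size S) w' i / (1 - W) * (nth (0, 0) S i).1),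
           (\sum_(i < size S) w' i / (1 - W) * (nth (0, 0) S i).2)).
split => //; split.
  right; apply: IH; exists (fun i => w' i / (1 - W)); split.
    move=> i; apply: divr_ge0 => //; lra.
  split => //.
  by rewrite -mulr_suml sw' divff.
case: x x1 x2 => a b /= -> ->; rewrite /comb /=; congr pair; congr (_ + _);
  rewrite mulr_sumr; apply: eq_bigr => i _; rewrite /w'; field; exact: WD.
Qed.

Lemma mem_conv {R : realType} (S : seq (point R)) s : s \in S -> conv_hull S s.
Proof.
move=> sS; have jS : (index s S < size S)%N by rewrite index_mem.
pose j : 'I_(size S) := Ordinal jS.
have nj : nth (0, 0) S j = s by rewrite /= nth_index.
have key : forall F : 'I_(size S) -> R, \sum_(i < size S) (i == j)%:R * F i = F j.
  move=> F; rewrite (bigD1 j) //= eqxx mul1r big1 ?addr0 // => i /negPf ->.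
  by rewrite mul0r.
exists (fun i => (i == j)%:R); split; first by move=> i; apply: ler0n.
split.
  have := key (fun _ => 1); rewrite /= => E.
  by rewrite -[X in _ = X]E; apply: eq_bigr => i _; rewrite mulr1.
split.
  by have := key (fun i => (nth (0, 0) S i).1); rewrite /= nj => ->.
by have := key (fun i => (nth (0, 0) S i).2); rewrite /= nj => ->.
Qed.

Lemma mix {R : realType} (H : point R -> Prop) t t1 t2 (s y' z' : point R) :
  convex H -> 0 <= t <= 1 -> 0 <= t1 <= 1 -> 0 <= t2 <= 1 ->
  (t1 = 1 \/ H y') -> (t2 = 1 \/ H z') ->
  t * (1 - t1) + (1 - t) * (1 - t2) != 0 ->
  exists w, H w /\
    comb t (comb t1 s y') (comb t2 s z') =
    comb (1 - (t * (1 - t1) + (1 - t) * (1 - t2))) s w.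
Proof.
move=> cH t01 t101 t201 Hy Hz.
set a := t * (1 - t1); set b := (1 - t) * (1 - t2) => abn0.
have ha : 0 <= a by apply: mulr_ge0; lra.
have hb : 0 <= b by apply: mulr_ge0; lra.
have E : forall u v w : R, t * (t1 * u + (1 - t1) * v) + (1 - t) * (t2 * u + (1 - t2) * w)
   = (1 - (a + b)) * u + a * v + b * w by move=> u v w; rewrite /a /b; ring.
have abp : 0 < a + b by rewrite lt0r abn0 /=; lra.
exists (comb (a / (a + b)) y' z'); split; last first.
  rewrite /comb /= !E; congr pair; field; exact: abn0.
case: Hy => [t11|Hy].
  have a0 : a = 0 by rewrite /a t11; ring.
  rewrite a0 mul0r comb0; case: Hz => // t21.
  by move: abn0; rewrite a0 /b t21; rewrite subrr mulr0 addr0 eqxx.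
case: Hz => [t21|Hz].
  have b0 : b = 0 by rewrite /b t21; ring.
  have a0 : a != 0 by move: abn0; rewrite b0 addr0.
  by rewrite b0 addr0 divff // comb1.
apply: cH => //; apply/andP; split.
  by apply: divr_ge0 => //; exact: ltW.
by rewrite ler_pdivrMr // mul1r lerDl.
Qed.

Lemma hull_sub {R : realType} (S T : seq (point R)) :
  (forall s, s \in S -> s \in T) -> forall x, hull S x -> hull T x.
Proof.
move=> ST; apply: hull_min; first exact: hull_convex.
by move=> s sS; apply: hull_mem; apply: ST.
Qed.

Lemma KM {R : realType} (P : point R -> Prop) n (S : seq (point R)) :
  (size S <= n)%N -> (forall x, P x <-> hull S x) ->
  exists T, (forall t, t \in T -> is_vertex P t) /\ (forall x, P x -> hull T x).
Proof.
elim: n S => [|n IH] S.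
  rewrite leqn0 => /nilP -> HP; exists [::]; split => // x /HP //.
move=> Sn HP.
case: (classic (exists s, s \in S /\ ~ is_vertex P s)) => [[s [sS nv]]|allv]; last first.
  exists S; split; last by move=> x /HP.
  move=> t tS; apply: NNPP => nv; apply: allv; by exists t.
set S' := rem s S.
have pS : forall x, x \in S -> x \in s :: S'.
  by move=> x xS; rewrite -(perm_mem (perm_to_rem sS)).
have S'S : forall x, hull S' x -> hull S x by apply: hull_sub => x /mem_rem.
have SsS : forall x, hull S x -> hull (s :: S') x by apply: hull_sub.
have Ps : P s by apply/HP/hull_mem.
have sS' : hull S' s.
  move: nv; rewrite /is_vertex => nv.
  have [y [z [Py [Pz [t [t01 [E nyz]]]]]]] : exists y z, P y /\ P z /\ exists t, 0 < t < 1 /\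
     s = (t * y.1 + (1 - t) * z.1, t * y.2 + (1 - t) * z.2) /\ ~ (y = s /\ z = s).
    apply: NNPP => C; apply: nv; split => // y z Py Pz t t01 E.
    apply: NNPP => nyz; apply: C; exists y, z; split => //; split => //; exists t; by [].
  have [t1 [y' [t101 [Hy Ey]]]] := SsS _ (proj1 (HP y) Py).
  have [t2 [z' [t201 [Hz Ez]]]] := SsS _ (proj1 (HP z) Pz).
  subst y z.
  have t01' : 0 <= t <= 1 by lra.
  have [ab0|abn0] := eqVneq (t * (1 - t1) + (1 - t) * (1 - t2)) 0.
    exfalso; apply: nyz.
    have h1 : 0 <= t * (1 - t1) by apply: mulr_ge0; lra.
    have h2 : 0 <= (1 - t) * (1 - t2) by apply: mulr_ge0; lra.
    have e1 : t * (1 - t1) = 0 by lra.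
    have e2 : (1 - t) * (1 - t2) = 0 by lra.
    have tn0 : t != 0 by rewrite lt0r_neq0 //; lra.
    have tn1 : 1 - t != 0 by rewrite lt0r_neq0 //; lra.
    move/eqP: e1; rewrite mulf_eq0 (negPf tn0) /= subr_eq0 => /eqP <-.
    move/eqP: e2; rewrite mulf_eq0 (negPf tn1) /= subr_eq0 => /eqP <-.
    by rewrite !comb1.
  have [w [Hw Ew]] := @mix _ (hull S') t t1 t2 s y' z' (hull_convex S') t01' t101 t201 Hy Hz abn0.
  move: E; rewrite -/(comb t _ _) Ew.
  set c := t * (1 - t1) + (1 - t) * (1 - t2) in abn0 * => Es.
  suff -> : s = w by [].
  move: Es; clear -abn0; case: s => s1 s2; case: w => w1 w2; rewrite /comb /= => -[e1 e2].
  have key : forall u v : R, u = (1 - c) * u + (1 - (1 - c)) * v -> u = v.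
    move=> u v e; apply: (mulfI abn0); apply/eqP; rewrite -subr_eq0; apply/eqP.
    transitivity (u - ((1 - c) * u + (1 - (1 - c)) * v)); first ring.
    by rewrite -e subrr.
  by congr pair; apply: key.
have HP' : forall x, P x <-> hull S' x.
  move=> x; split; last by move=> /S'S /HP.
  move=> /HP; apply: hull_min; first exact: hull_convex.
  move=> y /pS; rewrite inE => /orP [/eqP -> //|]; exact: hull_mem.
have Sn' : (size S' <= n)%N by rewrite size_rem //; move: Sn; case: (size S).
have [T [HT1 HT2]] := IH S' Sn' HP'.
by exists T.
Qed.

Lemma halfplane {R : realType} (f : point R -> R) c :
  (forall t y z, f (comb t y z) = t * f y + (1 - t) * f z) -> convex (fun y => f y <= c).
Proof.
move=> Hf x y t /= hx hy t01; rewrite Hf.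
have h1 : t * f x <= t * c by apply: ler_wpM2l => //; lra.
have h2 : (1 - t) * f y <= (1 - t) * c by apply: ler_wpM2l => //; lra.
have -> : c = t * c + (1 - t) * c by ring.
exact: lerD.
Qed.

Lemma lineset {R : realType} (f : point R -> R) c :
  (forall t y z, f (comb t y z) = t * f y + (1 - t) * f z) -> convex (fun y => f y = c).
Proof. by move=> Hf x y t /= hx hy _; rewrite Hf hx hy; ring. Qed.

Lemma bnd {R : realType} (f : point R -> R) (S : seq (point R)) :
  exists M, 0 <= M /\ forall s, s \in S -> f s <= M.
Proof.
elim: S => [|s S [M [M0 HM]]]; first by exists 0.
exists (`|f s| + M); split; first by apply: addr_ge0.
move=> x; rewrite inE => /orP [/eqP ->|xS].
  by apply: le_trans (ler_norm _) _; rewrite lerDl.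
by apply: le_trans (HM _ xS) _; rewrite lerDr.
Qed.

Lemma pnegK {R : realType} (x : point R) : pneg (pneg x) = x.
Proof. by case: x => a b; rewrite /pneg /= !opprK. Qed.

Lemma neq_of {R : realType} (f : point R -> R) x y : f x != f y -> x != y.
Proof. by apply: contra_neq => ->. Qed.
Theorem proposition5 (R : realType) (P : point R -> Prop) :
  convex_polygon P ->
  (forall x, tau_img P x <-> polar P x) ->
  exists V : seq (point R),
    uniq V /\ (6 <= size V)%N /\ (forall v, v \in V -> is_vertex P v).
Proof.
move=> [S HS] Htau.
have HQ : forall x, P x <-> forall y, P y -> cross x y <= 1.
  move=> x; split.
    move=> Px y Py; have : polar P (tau x) by apply/Htau; exists x.
    move=> /(_ y Py) H.
    have -> : cross x y = dot y (tau x) by rewrite /cross /dot /tau /=; ring.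
    exact: H.
  move=> H; have : tau_img P (tau x).
    apply/Htau => y Py.
    have <- : cross x y = dot y (tau x) by rewrite /cross /dot /tau /=; ring.
    exact: H.
  move=> [y [Py E]]; suff -> : x = y by [].
  move: E; clear; case: x => x1 x2; case: y => y1 y2; rewrite /tau /= => -[e1 e2].
  by congr pair => //; rewrite -[x2]opprK e1 opprK.
have Pconv : convex P.
  move=> x y t Px Py t01; apply/HQ => z Pz.
  apply: (@halfplane _ (fun x => cross x z) 1) => //.
  - by move=> t' y' z'; rewrite /cross /comb /=; ring.
  - exact: (proj1 (HQ x) Px).
  - exact: (proj1 (HQ y) Py).
have HP : forall x, P x <-> hull S x.
  move=> x; split; first by move/HS/conv_to_hull.
  apply: hull_min => // s sS; apply/HS; exact: mem_conv.
have [T [HT1 HT2]] := @KM _ P _ S (leqnn _) HP.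
have Tsub : forall C, convex C -> (forall t, t \in T -> C t) -> forall x, P x -> C x.
  by move=> C cC hC x /HT2; apply: hull_min.
have Psym : forall x, P x -> P (pneg x).
  move=> x Px; apply/HQ => y Py.
  have -> : cross (pneg x) y = cross y x by rewrite /cross /pneg /=; ring.
  exact: (proj1 (HQ y) Py).
have Vneg : forall v, is_vertex P v -> is_vertex P (pneg v).
  move=> v [Pv Hv]; split; first exact: Psym.
  move=> y z Py Pz t t01 E.
  have := Hv (pneg y) (pneg z) (Psym _ Py) (Psym _ Pz) t t01.
  case: (v) E => v1 v2; case: (y) => y1 y2; case: (z) => z1 z2; rewrite /pneg /= => -[e1 e2].
  case.
    by congr pair; [rewrite -[v1]opprK e1 | rewrite -[v2]opprK e2]; ring.
  by move=> [h1 h2] [h3 h4]; split; congr pair; lra.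
have eps : forall d, exists e, 0 < e /\ P (e * d.1, e * d.2).
  move=> d; have [M [M0 HM]] := bnd (fun y => cross d y) S.
  have HM' : forall y, P y -> cross d y <= M.
    move=> y /HP; apply: (@hull_min _ (fun y => cross d y <= M)) => //.
    by apply: halfplane => t' y' z'; rewrite /cross /comb /=; ring.
  have M1 : 0 < M + 1 by lra.
  exists (M + 1)^-1; split; first by rewrite invr_gt0.
  apply/HQ => y Py.
  have -> : cross ((M + 1)^-1 * d.1, (M + 1)^-1 * d.2) y = (M + 1)^-1 * cross d y.
    by rewrite /cross /=; ring.
  rewrite mulrC ler_pdivrMr // mul1r.
  have := HM' y Py; lra.
have sq0 : forall a : point R, a != (0, 0) -> 0 < a.1 * a.1 + a.2 * a.2.
  move=> [a1 a2] /= an0.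
  have h1 : 0 <= a1 * a1 by nra.
  have h2 : 0 <= a2 * a2 by nra.
  have [a10|a1n0] := eqVneq a1 0.
    have a2n0 : a2 != 0 by apply: contra_neq an0 => a20; rewrite a10 a20.
    have : 0 < a2 * a2 by rewrite lt0r mulf_neq0.
    lra.
  have : 0 < a1 * a1 by rewrite lt0r mulf_neq0.
  lra.
have [a [aT an0]] : exists a, a \in T /\ a != (0, 0).
  apply: NNPP => H.
  have T0 : forall t, t \in T -> t.1 = 0.
    move=> t tT; have : t == (0, 0) by apply: NNPP => tn0; apply: H; exists t; split => //; exact/negP.
    by move/eqP ->.
  have := Tsub (fun y => y.1 = 0) (@lineset _ (fun y => y.1) 0 (fun t y z => erefl)) T0.
  have [e [e0 Pe]] := eps (1, 0).
  move=> /(_ _ Pe) /=; rewrite mulr1 => e00; by rewrite e00 ltxx in e0.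
have [Pa _] := HT1 a aT.
have [b [bT kn0]] : exists b, b \in T /\ cross a b != 0.
  apply: NNPP => H.
  have T0 : forall t, t \in T -> cross a t = 0.
    move=> t tT; apply/eqP; apply: NNPP => tn0; apply: H; exists t; split => //; exact/negP.
  have aff : forall t y z, cross a (comb t y z) = t * cross a y + (1 - t) * cross a z.
    by move=> t y z; rewrite /cross /comb /=; ring.
  have := Tsub (fun y => cross a y = 0) (@lineset _ (fun y => cross a y) 0 aff) T0.
  have [e [e0 Pe]] := eps (- a.2, a.1).
  move=> /(_ _ Pe).
  have -> : cross a (e * (- a.2, a.1).1, e * (- a.2, a.1).2) = e * (a.1 * a.1 + a.2 * a.2).
    by rewrite /cross /=; ring.
  move=> /eqP; rewrite mulf_eq0 => /orP [/eqP e00|/eqP s0].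
    by rewrite e00 ltxx in e0.
  by have := sq0 a an0; rewrite s0 ltxx.
have [Pb _] := HT1 b bT.
set k := cross a b in kn0.
have [c [cT cn]] : exists c, c \in T /\ c \notin [:: a; pneg a; b; pneg b].
  apply: NNPP => H.
  have T4 : forall t, t \in T -> t \in [:: a; pneg a; b; pneg b].
    move=> t tT; apply: NNPP => tn; apply: H; exists t; split => //; exact/negP.
  pose x := ((a.1 + b.1) / k, (a.2 + b.2) / k).
  have cx : forall y, cross x y = (cross a y + cross b y) / k.
    by move=> y; rewrite /x /cross /=; field.
  have Px : P x.
    apply/HQ; apply: Tsub.
      by apply: halfplane => t y z; rewrite /cross /comb /=; ring.
    move=> t /T4; rewrite !inE => /or4P [] /eqP -> /=; rewrite cx.
    - rewrite (_ : _ / k = -1); first lra.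
      by rewrite /k /cross; field.
    - rewrite (_ : _ / k = 1) //.
      by rewrite /k /cross /pneg /=; field.
    - rewrite (_ : _ / k = 1) //.
      by rewrite /k /cross /pneg /=; field.
    - rewrite (_ : _ / k = -1); first lra.
      by rewrite /k /cross /pneg /=; field.
  have kk : 2 <= `|k|.
    have := Tsub (fun y => cross y b + cross a y <= `|k|) _ _ x Px.
    have -> : cross x b + cross a x = 2 by rewrite /x /k /cross /=; field.
    apply.
      by apply: halfplane => t y z; rewrite /cross /comb /=; ring.
    move=> t /T4; rewrite !inE => /or4P [] /eqP -> /=.
    - rewrite (_ : _ + _ = k); first exact: ler_norm.
      by rewrite /k /cross; ring.
    - rewrite (_ : _ + _ = - k); first by rewrite -normrN; exact: ler_norm.
      by rewrite /k /cross /pneg /=; ring.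
    - rewrite (_ : _ + _ = k); first exact: ler_norm.
      by rewrite /k /cross; ring.
    - rewrite (_ : _ + _ = - k); first by rewrite -normrN; exact: ler_norm.
      by rewrite /k /cross /pneg /=; ring.
  have k1 : `|k| <= 1.
    rewrite ler_norml; apply/andP; split.
      have := proj1 (HQ b) Pb a Pa.
      have -> : cross b a = - k by rewrite /k /cross; ring.
      lra.
    exact: (proj1 (HQ a) Pa b Pb).
  lra.
have [Pc _] := HT1 c cT.
have negneq : forall x : point R, x != (0, 0) -> x != pneg x.
  move=> [x1 x2] xn0; apply: contra_neq xn0; rewrite /pneg /= => -[e1 e2].
  congr pair; lra.
have nv0 : ~ is_vertex P (0, 0).
  move=> [_ H0].
  have h : (0 < (1 / 2 : R)) && ((1 / 2 : R) < 1) by apply/andP; split; lra.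
  have E : ((0 : R), (0 : R)) = (1 / 2 * a.1 + (1 - 1 / 2) * (pneg a).1,
                                 1 / 2 * a.2 + (1 - 1 / 2) * (pneg a).2).
    by rewrite /pneg /=; congr pair; field.
  have [Ea _] := H0 a (pneg a) Pa (Psym _ Pa) (1 / 2) h E.
  by rewrite Ea eqxx in an0.
have [vc _] := (HT1 c cT).
have cn0 : c != (0, 0).
  by apply/negP => /eqP c0; apply: nv0; rewrite -c0; exact: HT1.
have bn0 : b != (0, 0).
  by apply/negP => /eqP b0; move: kn0; rewrite /k b0 /cross /= !mulr0 subrr eqxx.
move: cn; rewrite !inE !negb_or => /and4P [ca cpa cb cpb].
have cr : forall x y : point R, cross a x != cross a y -> x != y := fun x y => @neq_of _ (cross a) x y.
have caa : cross a a = 0 by rewrite /cross; ring.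
have capa : cross a (pneg a) = 0 by rewrite /cross /pneg /=; ring.
have capb : cross a (pneg b) = - k by rewrite /k /cross /pneg /=; ring.
have kn0' : - k != 0 by rewrite oppr_eq0.
have pneq : forall x y : point R, x != y -> pneg x != pneg y.
  by move=> x y xy; apply/eqP => E; move/eqP: xy; apply; rewrite -(pnegK x) E pnegK.
have pneq2 : forall x y : point R, x != pneg y -> pneg x != y.
  by move=> x y xy; apply/eqP => E; move/eqP: xy; apply; rewrite -E pnegK.
exists [:: a; pneg a; b; pneg b; c; pneg c]; split; last split => //.
  have ac : a != c by rewrite eq_sym.
  have bc : b != c by rewrite eq_sym.
  have f1 : a != pneg a := negneq a an0.
  have f2 : a != b by apply: cr; rewrite caa eq_sym.
  have f3 : a != pneg b by apply: cr; rewrite caa capb eq_sym.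
  have f5 : a != pneg c by rewrite eq_sym; exact: pneq2 c a cpa.
  have f6 : pneg a != b by apply: cr; rewrite capa eq_sym.
  have f7 : pneg a != pneg b by apply: cr; rewrite capa capb eq_sym.
  have f8 : pneg a != c by rewrite eq_sym.
  have f9 : pneg a != pneg c := pneq a c ac.
  have f10 : b != pneg b := negneq b bn0.
  have f12 : b != pneg c by rewrite eq_sym; exact: pneq2 c b cpb.
  have f13 : pneg b != c by rewrite eq_sym.
  have f14 : pneg b != pneg c := pneq b c bc.
  have f15 : c != pneg c := negneq c cn0.
  by rewrite /= !inE !negb_or f1 f2 f3 ac f5 f6 f7 f8 f9 f10 bc f12 f13 f14 f15.
move=> v; rewrite !inE => /or3P [/eqP ->|/eqP ->|/or4P [] /eqP ->].
- exact: HT1.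
- exact/Vneg/HT1.
- exact: HT1.
- exact/Vneg/HT1.
- exact: HT1.
- exact/Vneg/HT1.
Qed.
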